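(* Let $m,n,p\in\mathbb N^+$, let $G=(V,E)$ be a graph, and let $A,B\subseteq V$ be disjoint such that $|N(u)\cap B|\ge p$ for every $u\in A$. If $|A|>(m-1)(n-1)^p$, then (i) there are $m$ vertices $u_1,\ldots,u_m\in A$ and $p$ vertices $v_1,\ldots,v_p\in B$ with $\{u_i,v_j\}\in E$ for all $i\in[m]$, $j\in[p]$, or (ii) there are $n$ vertices $u_1,\ldots,u_n\in A$ and $n$ vertices $v_1,\ldots,v_n\in B$ such that for all $i,j\in[n]$, $\{u_i,v_j\}\in E$ if and only if $i=j$.
   Context: All graphs are simple. $N(u)$ denotes the set of neighbors of $u$ in $G$. $[n]=\{1,\dots,n\}$. *)

(* Defs.v *)
(* A simple graph on a finite vertex type T is a symmetric,
   irreflexive boolean relation e : rel T. *)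
From mathcomp Require Import all_boot.
Set Implicit Arguments. Unset Strict Implicit. Unset Printing Implicit Defensive.

Definition nbhd (T : finType) (e : rel T) (u : T) : {set T} := [set v | e u v].

(* Main.v *)
Require Import Defs.
From mathcomp Require Import all_boot.
From mathcomp Require Import zify.
Set Implicit Arguments. Unset Strict Implicit. Unset Printing Implicit Defensive.

Definition C1 (T : finType) (e : rel T) m p (A B : {set T}) :=
  exists U W : {set T}, [/\ U \subset A, W \subset B, #|U| = m, #|W| = p &
     forall u w, u \in U -> w \in W -> e u w].

Definition C2 (T : finType) (e : rel T) n (A B : {set T}) :=
  exists u v : 'I_n -> T, [/\ forall i, u i \in A, forall j, v j \in B &
     forall i j, e (u i) (v j) = (i == j)].

Lemma sub_card (T : finType) (A : {set T}) m :
  m <= #|A| -> exists U : {set T}, U \subset A /\ #|U| = m.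
Proof.
elim: m => [|m IH] hm.
  by exists set0; rewrite sub0set cards0.
have [U [hUA hU]] := IH (ltnW hm).
have : 0 < #|A :\: U| by rewrite cardsD (setIidPr hUA) hU; lia.
rewrite card_gt0 => /set0Pn [x]; rewrite inE => /andP [xU xA].
exists (x |: U); split.
  by apply/subsetP => y; rewrite in_setU1 => /orP [/eqP -> //| /(subsetP hUA)].
by rewrite cardsU1 xU hU.
Qed.

Lemma greedy (T : finType) (e : rel T) D : forall k (A B : {set T}),
  (forall u, u \in A -> exists2 w, w \in B & e u w) ->
  (forall w, w \in B -> #|[set u in A | e u w]| <= D) ->
  (k = 0 \/ k.-1 * D < #|A|) -> C2 e k A B.
Proof.
elim=> [|k IH] A B hnb hdeg hk.
  have f : 'I_0 -> T by case.
  by exists f, f; split; case.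
have hA : k * D < #|A| by case: hk.
have : 0 < #|A| by lia.
rewrite card_gt0 => /set0Pn [x0 x0A].
case: (arg_minnP (fun u => #|nbhd e u :&: B|) x0A) => u0 u0A u0min.
have [w0 w0B ew0] := hnb u0 u0A.
set S := [set u in A | e u w0].
set A' := A :\: S.
set B' := [set w in B | ~~ e u0 w].
have [||| u' [v' [hu' hv' he']]] := IH A' B'.
- move=> u; rewrite !inE => /andP [nuS uA].
  have nuw : ~~ e u w0 by move: nuS; rewrite uA.
  case: (pickP [pred w | (w \in B') && e u w]) => [w /andP [wB euw] | h].
    by exists w.
  have sub : nbhd e u :&: B \subset nbhd e u0 :&: B.
    apply/subsetP => w; rewrite !inE => /andP [euw wB]; rewrite wB andbT.
    have := h w; rewrite /= !inE wB euw /=. by rewrite andbT; case: (e u0 w).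
  have : nbhd e u :&: B == nbhd e u0 :&: B by rewrite eqEcard sub u0min.
  move/eqP => hEq.
  have : w0 \in nbhd e u :&: B by rewrite hEq !inE ew0 w0B.
  by rewrite !inE (negbTE nuw).
- move=> w; rewrite inE => /andP [wB _].
  apply: leq_trans (hdeg w wB); apply: subset_leq_card.
  by apply/subsetP => u; rewrite !inE => /andP [/andP [_ ->] ->].
- case: k {IH hk} hA => [|k] hA; [by left | right] => /=.
  have h1 : #|A :&: S| <= D.
    apply: leq_trans (hdeg w0 w0B); apply: subset_leq_card; exact: subsetIr.
  rewrite /A' cardsD; lia.
pose u : 'I_k.+1 -> T := fun i => if unlift ord0 i is Some j then u' j else u0.
pose v : 'I_k.+1 -> T := fun i => if unlift ord0 i is Some j then v' j else w0.
exists u, v; split.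
- move=> i; rewrite /u; case: (unliftP ord0 i) => [j|] _ //.
  by have := hu' j; rewrite !inE => /andP [_ ->].
- move=> i; rewrite /v; case: (unliftP ord0 i) => [j|] _ //.
  by have := hv' j; rewrite !inE => /andP [-> _].
move=> i j; rewrite /u /v.
case: (unliftP ord0 i) => [i'|] hi; case: (unliftP ord0 j) => [j'|] hj;
  rewrite hi hj.
- by rewrite he' (inj_eq lift_inj).
- have := hu' i'; rewrite !inE => /andP [h1 h2]; move: h1; rewrite h2 /=.
  by rewrite eq_sym (negbTE (neq_lift _ _)) => /negbTE.
- have := hv' j'; rewrite !inE => /andP [_ h].
  by rewrite (negbTE (neq_lift _ _)) (negbTE h).
- by rewrite eqxx.
Qed.

Lemma mainH (T : finType) (e : rel T) m n : 0 < n -> forall p (A B : {set T}),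
  (forall u, u \in A -> p <= #|nbhd e u :&: B|) ->
  (m - 1) * (n - 1) ^ p < #|A| -> C1 e m p A B \/ C2 e n A B.
Proof.
move=> n_pos; elim=> [|p IH] A B hdeg hA.
  left; rewrite expn0 muln1 in hA.
  have [U [hUA hU]] := sub_card (A := A) (m := m) ltac:(lia).
  exists U, set0; split => //; [exact: sub0set | exact: cards0 | by move=> u w _; rewrite inE].
set D := (m - 1) * (n - 1) ^ p.
case: (pickP [pred w | (w \in B) && (D < #|[set u in A | e u w]|)]) => [w /andP [wB hw] | none].
  set A' := [set u in A | e u w].
  have [||[U [W [hUA hWB hU hW hE]]]|[u [v [hu hv he]]]] := IH A' (B :\ w).
  - move=> u; rewrite inE => /andP [uA euw].
    have := hdeg u uA.
    have : nbhd e u :&: B \subset w |: (nbhd e u :&: (B :\ w)).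
      apply/subsetP => x; rewrite !inE => /andP [-> ->]; rewrite andbT.
      by case: (x == w).
    move/subset_leq_card; rewrite cardsU1; case: (_ \notin _) => /=; lia.
  - exact: hw.
  - left; exists U, (w |: W); split.
    + by apply: subset_trans hUA _; apply/subsetP => x; rewrite inE => /andP [].
    + apply/subsetP => x; rewrite in_setU1 => /orP [/eqP -> //|].
      by move/(subsetP hWB); rewrite inE => /andP [].
    + exact: hU.
    + rewrite cardsU1 hW.
      have -> : w \notin W by apply/negP => /(subsetP hWB); rewrite !inE eqxx.
      by [].
    + move=> u x uU; rewrite in_setU1 => /orP [/eqP ->|]; last exact: hE.
      by have := subsetP hUA u uU; rewrite inE => /andP [].
  - right; exists u, v; split => // [i|j].
      by have := hu i; rewrite inE => /andP [].
    by have := hv j; rewrite inE => /andP [].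
right; apply: (greedy (D := D)).
- move=> u uA; have := hdeg u uA.
  move=> h; have : 0 < #|nbhd e u :&: B| by lia.
  rewrite card_gt0 => /set0Pn [w]; rewrite !inE => /andP [euw wB].
  by exists w.
- move=> w wB; have := none w; rewrite /= wB /= => /negbT; rewrite -leqNgt.
  by [].
- right; rewrite -subn1 /D; rewrite expnS in hA; rewrite mulnCA; exact: hA.
Qed.

Theorem lemma3p14 (T : finType) (e : rel T)
    (e_sym : symmetric e) (e_irr : irreflexive e)
    (m n p : nat) (m_pos : 0 < m) (n_pos : 0 < n) (p_pos : 0 < p)
    (A B : {set T}) (AB_disj : [disjoint A & B])
    (degA : forall u, u \in A -> p <= #|nbhd e u :&: B|)
    (hA : (m - 1) * (n - 1) ^ p < #|A|) :
  (exists (u : 'I_m -> T) (v : 'I_p -> T),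
      [/\ injective u, injective v,
          (forall i, u i \in A), (forall j, v j \in B) &
          (forall i j, e (u i) (v j))])
  \/
  (exists (u : 'I_n -> T) (v : 'I_n -> T),
      [/\ injective u, injective v,
          (forall i, u i \in A), (forall j, v j \in B) &
          (forall i j, e (u i) (v j) = (i == j))]).
Proof.
case: (mainH n_pos degA hA) => [[U [W [hUA hWB hU hW hE]]] | [u [v [hu hv he]]]].
  left.
  exists (fun i => enum_val (cast_ord (esym hU) i)),
         (fun j => enum_val (cast_ord (esym hW) j)); split.
  - by move=> i j /enum_val_inj /cast_ord_inj.
  - by move=> i j /enum_val_inj /cast_ord_inj.
  - by move=> i; apply: (subsetP hUA); exact: enum_valP.
  - by move=> j; apply: (subsetP hWB); exact: enum_valP.
  - by move=> i j; apply: hE; exact: enum_valP.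
right; exists u, v; split => //.
- move=> i j h; have := he i i; rewrite eqxx h he => /eqP ->; by [].
- move=> i j h; have := he i i; rewrite eqxx h he => /eqP ->; by [].
Qed.
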